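(* Fix $n\ge 1$. List all periodic canonical increment arrays over all coalition sizes $s=1,\ldots,n$ in some fixed order as $\underline{t}^{(1)},\ldots,\underline{t}^{(M)}$, where $M=\sum_{s=1}^{n}|\mathcal{P}(n,s)|$. For $\underline{t}^{(j)}$ of size $s_j$ let $d^{(j)}=n\,\pi(\underline{t}^{(j)})/s_j$, and let $H_1=0$, $H_j=\sum_{i=1}^{j-1}d^{(i)}$. Say agent $x\in\{1,\ldots,n\}$ is designated for $\underline{t}^{(j)}$ iff $(x-1-H_j)\bmod n<d^{(j)}$ (with $\bmod$ taking values in $\{0,\ldots,n-1\}$). Define the total allocation of agent $x$ as \[CV_x=\bigcup_{s=1}^{n}\{C(x,\underline{t}):\underline{t}\in\mathcal{A}(n,s)\}\;\cup\;\{C(x,\underline{t}^{(j)}):1\le j\le M,\ x\text{ designated for }\underline{t}^{(j)}\}.\] Then for every agent $x\in\{1,\ldots,n\}$, \[\left\lfloor\frac{2^n-1}{n}\right\rfloor\le|CV_x|\le\left\lceil\frac{2^n-1}{n}\right\rceil,\] so the total numbers of coalitions allocated to any two agents differ by at most one.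
   Context: Agent identifiers are $\{1,\ldots,n\}$, arithmetic on identifiers is modulo $n$ with representatives in $\{1,\ldots,n\}$ (a value $0$ is replaced by $n$). An increment array (IA) of size $s$ ($1\le s\le n$) for $n$ agents is a tuple $\underline{t}=\langle t_0,\ldots,t_{s-1}\rangle$ of non-negative integers with $\sum t_i=n-s$. Cumulative increments: $\varphi_1=0$, $\varphi_i=\sum_{k=0}^{i-2}(t_k+1)$ for $2\le i\le s+1$. The coalition generated from $x$ is $C(x,\underline{t})=\{x\}\cup\bigcup_{i=2}^{s}\{(x+\varphi_i)\bmod n\}$ (residues in $\{1,\ldots,n\}$). Two IAs of the same size are equivalent ($\approx$) if one is a circular shift of the other; the canonical representative of an equivalence class is its lexicographically smallest member. $\mathcal{E}(n,s)$ is the set of canonical representatives of IAs of size $s$. The period $\pi(\underline{t})$ is the least $p\in\{1,\ldots,s\}$ such that $\underline{t}$ consists of $s/p$ identical consecutive copies of its first $p$ entries. $\mathcal{A}(n,s)=\{\underline{t}\in\mathcal{E}(n,s):\pi(\underline{t})=s\}$ (aperiodic) and $\mathcal{P}(n,s)=\{\underline{t}\in\mathcal{E}(n,s):\pi(\underline{t})<s\}$ (periodic). *)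

(* Defs.v *)
From mathcomp Require Import all_boot all_order all_algebra.
From mathcomp Require Import finmap.
Set Implicit Arguments. Unset Strict Implicit. Unset Printing Implicit Defensive.
Local Open Scope fset_scope.

Definition modrep (n a : nat) : nat := if a %% n == 0 then n else a %% n.

Fixpoint lexle (a b : seq nat) : bool :=
  match a, b with
  | [::], _ => true
  | _ :: _, [::] => false
  | x :: a', y :: b' => (x < y) || ((x == y) && lexle a' b')
  end.

Definition is_IA (n s : nat) (t : seq nat) : bool :=
  [&& 1 <= s, s <= n, size t == s & sumn t == n - s].

Definition canonical (t : seq nat) : bool :=
  all (fun k => lexle t (rot k t)) (iota 0 (size t)).

Definition inE (n s : nat) (t : seq nat) : bool := is_IA n s t && canonical t.

Definition repeats (t : seq nat) (p : nat) : bool :=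
  (p %| size t) && (t == flatten (nseq (size t %/ p) (take p t))).

Definition period (t : seq nat) : nat :=
  head (size t) [seq p <- iota 1 (size t) | repeats t p].

Definition inA (n s : nat) (t : seq nat) : bool := inE n s t && (period t == s).
Definition inP (n s : nat) (t : seq nat) : bool := inE n s t && (period t < s).

Fixpoint bounded_seqs (k m : nat) : seq (seq nat) :=
  match k with
  | 0 => [:: [::]]
  | k'.+1 => [seq a :: r | a <- iota 0 m, r <- bounded_seqs k' m]
  end.

(* explicit enumeration of A(n,s) (entries of an IA are <= n - s <= n) *)
Definition enumA (n s : nat) : seq (seq nat) :=
  [seq t <- bounded_seqs s n.+1 | inA n s t].

Definition phi (t : seq nat) (i : nat) : nat :=
  sumn [seq k.+1 | k <- take i.-1 t].

Definition coalition (n x : nat) (t : seq nat) : {fset nat} :=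
  x |` [fset modrep n (x + phi t i) | i in iota 2 (size t).-1].

(* d^(j) for the j-th periodic IA, and H_j (0-indexed j) *)
Definition dval (n : nat) (t : seq nat) : nat := n * period t %/ size t.
Definition Hval (n : nat) (L : seq (seq nat)) (j : nat) : nat :=
  sumn [seq dval n t | t <- take j L].

(* agent x designated for the j-th entry of L (0-indexed) *)
Definition designated (n : nat) (L : seq (seq nat)) (x j : nat) : bool :=
  (((x%:Z - 1 - (Hval n L j)%:Z) %% n%:Z)%Z < (dval n (nth [::] L j))%:Z)%R.

Definition CV (n : nat) (L : seq (seq nat)) (x : nat) : {fset {fset nat}} :=
  [fset coalition n x t | t in flatten [seq enumA n s | s <- iota 1 n]]
  `|` [fset coalition n x (nth [::] L j)
        | j in [seq j <- iota 0 (size L) | designated n L x j]].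

(* Main.v *)
Require Import Defs.
From mathcomp Require Import all_boot all_order all_algebra.
From mathcomp Require Import finmap zify.


Lemma lexle_refl a : lexle a a.
Proof. by elim: a => //= x a ->; rewrite eqxx ltnn orbT. Qed.

Lemma lexle_trans a b c : lexle a b -> lexle b c -> lexle a c.
Proof.
elim: a b c => [//|x a IH] [|y b] [|z c] //=.
case/orP=> [lxy|/andP[/eqP-> hab]]; case/orP=> [lyz|/andP[/eqP<- hbc]].
- by rewrite (ltn_trans lxy lyz).
- by rewrite lxy.
- by rewrite lyz.
- by rewrite eqxx (IH _ _ hab hbc) orbT.
Qed.

Lemma lexle_anti a b : lexle a b -> lexle b a -> a = b.
Proof.
elim: a b => [|x a IH] [|y b] //=.
case/orP=> [lxy|/andP[/eqP-> hab]]; case/orP=> [lyx|/andP[/eqP hyx hba]].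
- by move: (ltn_trans lxy lyx); rewrite ltnn.
- by move: lxy; rewrite hyx ltnn.
- by move: lyx; rewrite ltnn.
- by rewrite (IH _ hab hba).
Qed.

Lemma lexle_total a b : lexle a b || lexle b a.
Proof.
elim: a b => [//|x a IH] [|y b] //=.
case: (ltngtP x y) => //= _; rewrite ?orbT //=; exact: IH.
Qed.

Fixpoint lmin (d : seq nat) (l : seq (seq nat)) :=
  match l with [::] => d | u :: l' => let m := lmin d l' in if lexle u m then u else m end.

Lemma lmin_mem d l : lmin d l \in d :: l.
Proof.
elim: l => [|u l IH] /=; first by rewrite inE.
case: ifP => _; first by rewrite !inE eqxx orbT.
by move: IH; rewrite !inE => /orP[->|->]; rewrite ?orbT.
Qed.

Lemma lmin_le d l u : u \in d :: l -> lexle (lmin d l) u.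
Proof.
elim: l u => [|v l IH] u /=; first by rewrite inE => /eqP->; exact: lexle_refl.
rewrite !inE => hu; case: ifP => h.
- case/or3P: hu => [/eqP->|/eqP->|hu].
  + by apply: (lexle_trans _ _ _ h); apply: IH; rewrite inE eqxx.
  + exact: lexle_refl.
  + by apply: (lexle_trans _ _ _ h); apply: IH; rewrite inE hu orbT.
- case/or3P: hu => [/eqP->|/eqP->|hu].
  + by apply: IH; rewrite inE eqxx.
  + by case/orP: (lexle_total v (lmin d l)) => [h'|//]; rewrite h' in h.
  + by apply: IH; rewrite inE hu orbT.
Qed.

Definition rots (t : seq nat) := [seq rot k t | k <- iota 0 (size t)].

Lemma rotsP t u : 0 < size t -> reflect (exists k, u = rot k t) (u \in rots t).
Proof.
move=> ht; apply: (iffP mapP) => [[k _ ->]|[k ->]]; first by exists k.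
case: (ltnP k (size t)) => hk.
- by exists k; rewrite // mem_iota.
- by exists 0; rewrite ?mem_iota // rot_oversize // rot0.
Qed.

Lemma rot_rot_ex (t : seq nat) i j : exists k, rot i (rot j t) = rot k t.
Proof. by rewrite rot_rot_add; eexists. Qed.

Lemma rot_back (t : seq nat) k : exists j, t = rot j (rot k t).
Proof. by exists (size (rot k t) - k); have := rotK k t; rewrite /rotr => ->. Qed.

Lemma canonicalP c k : canonical c -> lexle c (rot k c).
Proof.
move=> /allP h; case: (ltnP k (size c)) => hk.
- by apply: h; rewrite mem_iota.
- by rewrite rot_oversize // lexle_refl.
Qed.

Lemma canon_exists t : 0 < size t ->
  exists c, [/\ c \in rots t, canonical c & size c = size t].
Proof.
move=> ht; set m := lmin t (rots t).
have mr : m \in rots t.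
  have := lmin_mem t (rots t); rewrite inE -/m => /orP[/eqP->|//].
  by apply/rotsP => //; exists 0; rewrite rot0.
have [k mk] := rotsP _ _ ht mr.
have sm : size m = size t by rewrite mk size_rot.
exists m; split => //.
apply/allP => j _; apply: lmin_le; rewrite inE; apply/orP; right.
apply/rotsP => //; rewrite mk; exact: rot_rot_ex.
Qed.

Lemma canon_unique c c' : canonical c -> canonical c' ->
  (exists k, c' = rot k c) -> c = c'.
Proof.
move=> hc hc' [k e]; apply: lexle_anti; first by rewrite e; exact: canonicalP.
have [j ->] := rot_back c k; rewrite -e; exact: canonicalP.
Qed.

Lemma cat_comm_flatten (x y : seq nat) k :
  x ++ y = y ++ x -> size y = k * size x -> y = flatten (nseq k x).
Proof.
elim: k y => [|k IH] y e hs; first by apply/nilP; rewrite /nilp hs.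
have hle : size x <= size y by rewrite hs mulSn leq_addr.
have hx : take (size x) y = x.
  by move: (congr1 (take (size x)) e); rewrite take_size_cat // takel_cat.
set y' := drop (size x) y.
have ey : y = x ++ y' by rewrite -{1}(cat_take_drop (size x) y) hx.
have e' : x ++ y' = y' ++ x.
  by move: e; rewrite ey -catA => /eqP; rewrite eqseq_cat // eqxx /= => /eqP.
have hs' : size y' = k * size x by rewrite size_drop hs mulSn addKn.
by rewrite ey (IH _ e' hs').
Qed.

Lemma flatten_nseq_comm (b : seq nat) m :
  flatten (nseq m b) ++ b = b ++ flatten (nseq m b).
Proof. by elim: m => [|m IH] /=; rewrite ?cats0 // -catA IH. Qed.

Lemma repeatsP (c : seq nat) p : 0 < p ->
  repeats c p = (p %| size c) && (rot p c == c).
Proof.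
move=> hp; apply/idP/idP.
- case/andP=> hd /eqP e; rewrite hd /=.
  case: (posnP (size c)) => hc.
    by move/eqP: hc; rewrite size_eq0 => /eqP->.
  have [b [m [hb ->]]] : exists b m, size b = p /\ c = flatten (nseq m b).
    exists (take p c), (size c %/ p); split => //.
    by rewrite size_take; case: ltnP => // h1; apply/eqP; rewrite eqn_leq h1 (dvdn_leq hc hd).
  case: m => [|m] /=; first by rewrite rot_oversize.
  by rewrite -hb rot_size_cat flatten_nseq_comm.
- case/andP=> hd /eqP hr; rewrite /repeats hd /=.
  case: (posnP (size c)) => hc.
    by move/eqP: hc; rewrite size_eq0 => /eqP->; rewrite div0n.
  have hps : p <= size c by apply: dvdn_leq.
  set q := size c %/ p.
  have hq : size c = q * p by rewrite divnK.
  have q0 : 0 < q by move: hc; rewrite hq muln_gt0 => /andP[].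
  have e : take p c ++ drop p c = drop p c ++ take p c by rewrite cat_take_drop.
  have hs : size (drop p c) = q.-1 * size (take p c).
    by rewrite size_drop size_take_min (minn_idPl hps) hq -{1}(prednK q0) mulSn addKn.
  rewrite -{1}(cat_take_drop p c) (cat_comm_flatten _ _ _ e hs).
  by rewrite -{2}(prednK q0).
Qed.

Lemma head_filter_iota (P : pred nat) a m d :
  (exists2 k, a <= k < a + m & P k) ->
  let h := head d [seq k <- iota a m | P k] in
  [/\ a <= h < a + m, P h & forall k, a <= k < a + m -> P k -> h <= k].
Proof.
elim: m a => [|m IH] a [k hk pk] /=; first by move: hk; rewrite addn0 => /andP[h1 h2]; move: (leq_ltn_trans h1 h2); rewrite ltnn.
case: ifP => pa /=.
- split => //; first by rewrite leqnn addnS ltnS leq_addr.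
  by move=> j /andP[].
- have hk' : a.+1 <= k < a.+1 + m.
    move: hk; rewrite addSnnS; case/andP => h1 ->; rewrite andbT ltn_neqAle h1 andbT.
    by apply/eqP => ea; move: pk; rewrite -ea pa.
  have [/andP[h1 h2] h3 h4] := IH a.+1 (ex_intro2 _ _ k hk' pk).
  split => //; first by rewrite (ltnW h1) -addSnnS.
  move=> j /andP[hj1 hj2] pj; apply: h4 => //.
  rewrite addSnnS hj2 andbT ltn_neqAle hj1 andbT.
  by apply/eqP => ea; move: pj; rewrite -ea pa.
Qed.

Lemma repeats_size (c : seq nat) : 0 < size c -> repeats c (size c).
Proof. by move=> h; rewrite /repeats dvdnn divnn h /= take_size cats0 eqxx. Qed.

Lemma period_spec (c : seq nat) : 0 < size c ->
  [/\ 0 < period c <= size c, repeats c (period c) &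
      forall p, 0 < p <= size c -> repeats c p -> period c <= p].
Proof.
move=> hc.
have ex : exists2 k, 1 <= k < 1 + size c & repeats c k.
  by exists (size c); [rewrite hc add1n ltnSn | exact: repeats_size].
have [h1 h2 h3] := head_filter_iota (repeats c) 1 (size c) (size c) ex.
by rewrite /period; split => //.
Qed.

Section Stab.
Variable c : seq nat.
Hypothesis hc : 0 < size c.
Local Notation s := (size c).

Lemma stab_sub a b : b <= a -> a <= s -> rot a c = c -> rot b c = c -> rot (a - b) c = c.
Proof.
move=> hba has ha hb.
have := @rot_add_mod _ (a - b) b c (leq_trans hba has) (leq_trans (leq_subr b a) has).
by rewrite hb subnK // has /= ha.
Qed.

Lemma stab_gcd a b : a <= s -> b <= s -> rot a c = c -> rot b c = c -> rot (gcdn a b) c = c.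
Proof.
move: {2}(a + b) (leqnn (a + b)) => N; elim: N a b => [|N IH] a b.
  by rewrite leqn0 addn_eq0 => /andP[/eqP-> /eqP->]; rewrite gcdn0.
move=> hN ha hb ra rb.
case: (posnP a) => [->|a0]; first by rewrite gcd0n.
case: (posnP b) => [->|b0]; first by rewrite gcdn0.
case: (leqP b a) => hab.
- have -> : gcdn a b = gcdn (a - b) b.
    by rewrite gcdnC -{1}(subnKC hab) gcdnDl gcdnC.
  apply: IH => //; first by lia.
  + by apply: leq_trans (leq_subr _ _) ha.
  + exact: stab_sub.
- have -> : gcdn a b = gcdn a (b - a).
    by rewrite -{1}(subnKC (ltnW hab)) gcdnDl.
  apply: IH => //; first by lia.
  + by apply: leq_trans (leq_subr _ _) hb.
  + apply: stab_sub => //; exact: ltnW.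
Qed.

Lemma period_rot : rot (period c) c = c /\ period c %| s.
Proof.
have [/andP[p0 ps] hr _] := period_spec c hc.
by move: hr; rewrite repeatsP // => /andP[-> /eqP->].
Qed.

Lemma stab_dvd k : k <= s -> rot k c = c -> period c %| k.
Proof.
move=> hk rk; case: (posnP k) => [->|k0]; first by rewrite dvdn0.
have [/andP[p0 ps] hr hmin] := period_spec c hc.
have [rp dp] := period_rot.
set g := period c in p0 ps hr hmin rp dp *.
set h := gcdn k g.
have h0 : 0 < h by rewrite gcdn_gt0 k0.
have hg : h <= g by apply: dvdn_leq => //; exact: dvdn_gcdr.
have rh : rot h c = c by apply: stab_gcd.
have hs : h %| s by apply: dvdn_trans (dvdn_gcdr _ _) dp.
have rph : repeats c h by rewrite repeatsP // hs rh eqxx.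
have gh : g <= h by apply: hmin => //; rewrite h0 (leq_trans hg ps).
have -> : g = h by apply/eqP; rewrite eqn_leq gh hg.
exact: dvdn_gcdl.
Qed.

Lemma rot_mul j : j * period c <= s -> rot (j * period c) c = c.
Proof.
have [rp _] := period_rot.
elim: j => [|j IH] hj; first by rewrite mul0n rot0.
have hj' : j * period c <= s by apply: leq_trans hj; rewrite leq_mul2r leqnSn orbT.
have := @rot_add_mod _ (period c) (j * period c) c hj' (leq_trans (leq_pmull _ (ltn0Sn j)) hj).
by rewrite IH // rp -mulSn hj /= => <-.
Qed.

Lemma rot_mod k : k <= s -> rot k c = rot (k %% period c) c.
Proof.
move=> hk.
have hq : k %/ period c * period c <= s by apply: leq_trans hk; rewrite leq_trunc_div.
have hr : k %% period c <= s by apply: leq_trans hk; rewrite leq_mod.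
have := @rot_add_mod _ (k %% period c) (k %/ period c * period c) c hq hr.
by rewrite rot_mul // addnC -divn_eq hk /= => ->.
Qed.

Lemma rot_distinct a b : a < period c -> b < period c -> rot a c = rot b c -> a = b.
Proof.
have [/andP[p0 ps] _ _] := period_spec c hc.
wlog hab : a b / a <= b.
  move=> H ha hb e; case: (leqP a b) => h; first exact: H.
  by symmetry; apply: H => //; exact: ltnW.
move=> ha hb e.
have bs : b <= s by apply: leq_trans (ltnW hb) ps.
have as_ : a <= s by apply: leq_trans (ltnW ha) ps.
have hba : b - a <= s by apply: leq_trans (leq_subr _ _) bs.
have := @rot_add_mod _ (b - a) a c as_ hba.
rewrite subnK // bs /= -e rot_rot => /rot_inj hr.
have := stab_dvd _ hba hr.
case: (posnP (b - a)) => [e0|h0 /(dvdn_leq h0)].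
  by move=> _; apply/eqP; rewrite eqn_leq hab -subn_eq0 e0.
by rewrite leqNgt (leq_ltn_trans (leq_subr a b) hb).
Qed.

Lemma size_undup_rots : size (undup (rots c)) = period c.
Proof.
have [/andP[p0 ps] _ _] := period_spec c hc.
have pe : perm_eq (undup (rots c)) [seq rot k c | k <- iota 0 (period c)].
  apply: uniq_perm; first exact: undup_uniq.
    rewrite map_inj_in_uniq ?iota_uniq // => a b; rewrite !mem_iota /= => ha hb.
    exact: rot_distinct.
  move=> u; rewrite mem_undup; apply/mapP/mapP => [[k hk ->]|[k hk ->]].
  + exists (k %% period c); first by rewrite mem_iota ltn_mod p0.
    by apply: rot_mod; move: hk; rewrite mem_iota /= => /ltnW.
  + by exists k => //; move: hk; rewrite !mem_iota /= => /leq_trans; apply.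
by rewrite (perm_size pe) size_map size_iota.
Qed.
End Stab.

Lemma count_big (T : Type) (P : pred T) (s : seq T) : count P s = \sum_(x <- s) P x.
Proof. by elim: s => [|x s IH]; rewrite ?big_nil ?big_cons //= IH. Qed.

Lemma count_allpairs_cons (P : pred (seq nat)) (A : seq nat) (R : seq (seq nat)) :
  count P [seq a :: r | a <- A, r <- R] = \sum_(a <- A) count (fun r => P (a :: r)) R.
Proof.
elim: A => [|a A IH]; first by rewrite big_nil.
by rewrite allpairs_cons count_cat IH big_cons count_map.
Qed.

Lemma mem_bounded k m t :
  (t \in bounded_seqs k m) = (size t == k) && all (fun a => a < m) t.
Proof.
elim: k t => [|k IH] t /=; first by rewrite inE; case: t.
apply/allpairsP/idP => [[[a r] /= [ha hr ->]]|].
- move: hr ha; rewrite IH mem_iota => /andP[/eqP hs hr] /andP[_ ha].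
  by rewrite /= hs eqxx hr andbT.
- case: t => [//|a r] /= /andP[hs /andP[ha hr]].
  by exists (a, r); rewrite /= IH mem_iota /= ha hr -(eqn_add2r 1) !addn1 hs.
Qed.

Lemma uniq_bounded k m : uniq (bounded_seqs k m).
Proof.
elim: k => [//|k IH] /=.
apply: allpairs_uniq => //; first exact: iota_uniq.
by move=> [a r] [b q] _ _ /= [-> ->].
Qed.

Lemma hockey m k : \sum_(a <- iota 0 m.+1) 'C(m - a + k, k) = 'C(m + k.+1, k.+1).
Proof.
elim: m => [|m IH]; first by rewrite big_cons big_nil /= addn0 !binn.
rewrite (_ : iota 0 m.+2 = 0 :: map (addn 1) (iota 0 m.+1)); last by rewrite -iotaDl.
rewrite big_cons big_map.
under eq_bigr => a _ do rewrite add1n subSS.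
by rewrite IH subn0 addnC [in RHS]addSn binS addSnnS.
Qed.

Lemma count_sum_eq k B m : m < B ->
  count (fun t => sumn t == m) (bounded_seqs k.+1 B) = 'C(m + k, k).
Proof.
elim: k m => [|k IH] m hm.
- rewrite (_ : bounded_seqs 1 B = [seq a :: r | a <- iota 0 B, r <- [:: [::]]]) //.
  rewrite count_allpairs_cons addn0 bin0.
  have -> : 1 = count_mem m (iota 0 B) by rewrite count_uniq_mem ?iota_uniq // mem_iota hm.
  rewrite count_big; apply: eq_bigr => a _ /=; by rewrite !addn0.
- rewrite (_ : bounded_seqs k.+2 B = [seq a :: r | a <- iota 0 B, r <- bounded_seqs k.+1 B]) //.
  rewrite count_allpairs_cons.
  have -> : iota 0 B = iota 0 m.+1 ++ iota m.+1 (B - m.+1) by rewrite -iotaD subnKC.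
  rewrite big_cat.
  rewrite [X in _ + X = _](_ : _ = 0) ?addn0; last first.
    rewrite big_seq big1 // => a; rewrite mem_iota => /andP[h1 _].
    rewrite (eq_count (a2:=pred0)) ?count_pred0 // => r /=; apply/eqP; lia.
  rewrite -hockey big_seq [RHS]big_seq; apply: eq_bigr => a; rewrite mem_iota /= => ha.
  rewrite -IH; last by lia.
  by apply: eq_count => r /=; lia.
Qed.

Definition IAs (n s : nat) := [seq t <- bounded_seqs s n.+1 | is_IA n s t].

Lemma size_IAs n s : 1 <= s <= n -> size (IAs n s) = 'C(n.-1, s.-1).
Proof.
case/andP=> h1 h2; rewrite size_filter.
rewrite (eq_in_count (a2 := fun t => sumn t == n - s)); last first.
  by move=> t; rewrite mem_bounded /is_IA h1 h2 => /andP[-> _].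
case: s h1 h2 => [//|k] _ h2; rewrite count_sum_eq; last by lia.
by congr binomial; lia.
Qed.

Lemma mem_leq_sumn (a : nat) t : a \in t -> a <= sumn t.
Proof.
elim: t => [//|b t IH]; rewrite inE => /orP[/eqP->|h] /=; first exact: leq_addr.
exact: leq_trans (IH h) (leq_addl _ _).
Qed.

Lemma mem_IAs n s t : (t \in IAs n s) = is_IA n s t.
Proof.
rewrite mem_filter mem_bounded.
case h: (is_IA n s t) => //=.
move/and4P: h => [h1 h2 /eqP hs /eqP ht]; rewrite hs eqxx /=.
apply/allP => a ha; rewrite ltnS.
have := mem_leq_sumn _ _ ha; lia.
Qed.

Lemma uniq_IAs n s : uniq (IAs n s).
Proof. exact/filter_uniq/uniq_bounded. Qed.

Definition Ks (n s : nat) := [seq t <- bounded_seqs s n.+1 | Defs.inE n s t].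

Lemma mem_Ks n s t : (t \in Ks n s) = is_IA n s t && canonical t.
Proof.
rewrite mem_filter /Defs.inE; case h: (is_IA n s t) => //=.
have : t \in IAs n s by rewrite mem_IAs.
by rewrite mem_filter h /= => ->; rewrite andbT.
Qed.

Lemma uniq_Ks n s : uniq (Ks n s).
Proof. exact/filter_uniq/uniq_bounded. Qed.

Lemma is_IA_rot n s t k : is_IA n s (rot k t) = is_IA n s t.
Proof.
by rewrite /is_IA size_rot (perm_sumn (_ : perm_eq (rot k t) t)) // perm_rot perm_refl.
Qed.

Lemma is_IA_size n s t : is_IA n s t -> size t = s /\ 0 < s.
Proof. by case/and4P=> h1 _ /eqP. Qed.

Lemma rots_sym (t c : seq nat) : 0 < size t -> size c = size t ->
  (c \in rots t) = (t \in rots c).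
Proof.
move=> ht hs; have hc : 0 < size c by rewrite hs.
by apply/(rotsP _ _ ht)/(rotsP _ _ hc) => [[k ->]|[k ->]]; apply: rot_back.
Qed.

Lemma count_mem_undup (l X : seq (seq nat)) : uniq X -> {subset l <= X} ->
  count (fun t => t \in l) X = size (undup l).
Proof.
move=> uX sub; rewrite -size_filter; apply: perm_size; apply: uniq_perm.
- exact: filter_uniq.
- exact: undup_uniq.
- by move=> u; rewrite mem_filter mem_undup; case h: (u \in l) => //=; apply: sub.
Qed.

Lemma count_canon_one n s t : is_IA n s t ->
  count (fun c => c \in rots t) (Ks n s) = 1.
Proof.
move=> ht; have [hs s0] := is_IA_size _ _ _ ht.
have t0 : 0 < size t by rewrite hs.
have [m [mr mc ms]] := canon_exists _ t0.
have [k mk] := rotsP _ _ t0 mr.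
have mK : m \in Ks n s by rewrite mem_Ks mk is_IA_rot ht -mk mc.
rewrite -size_filter.
have -> : size [seq c <- Ks n s | c \in rots t] = size [:: m]; last by [].
apply: perm_size; apply: uniq_perm => //; first exact/filter_uniq/uniq_Ks.
move=> c; rewrite mem_filter inE; apply/andP/eqP => [[cr]|->]; last by [].
rewrite mem_Ks => /andP[cI cc].
have [j cj] := rotsP _ _ t0 cr.
apply: canon_unique => //.
have [i ti] := rot_back t j.
rewrite mk ti -cj; exact: rot_rot_ex.
Qed.

Lemma sum_period n s : 1 <= s <= n ->
  \sum_(c <- Ks n s) period c = size (IAs n s).
Proof.
move=> hs.
have -> : size (IAs n s) = \sum_(t <- IAs n s) count (fun c => c \in rots t) (Ks n s).
  rewrite -[LHS]count_predT count_big; rewrite big_seq [RHS]big_seq; apply: eq_bigr => t.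
  by rewrite mem_IAs => ht; rewrite count_canon_one.
under [RHS]eq_bigr => t _ do rewrite count_big.
rewrite (exchange_big) /= big_seq [RHS]big_seq; apply: eq_bigr => c.
rewrite mem_Ks => /andP[cI cc].
have [cs c0] := is_IA_size _ _ _ cI.
rewrite -count_big.
rewrite (eq_in_count (a2 := fun t => t \in rots c)); last first.
  move=> t; rewrite mem_IAs => tI; have [ts _] := is_IA_size _ _ _ tI.
  by apply: rots_sym; rewrite ?ts ?cs.
rewrite count_mem_undup ?uniq_IAs //.
- by rewrite size_undup_rots // cs.
- move=> u /rotsP; rewrite cs => /(_ c0) [k ->]; by rewrite mem_IAs is_IA_rot.
Qed.

Lemma sumn_flatten_nseq m (b : seq nat) : sumn (flatten (nseq m b)) = m * sumn b.
Proof. by elim: m => [|m IH] //=; rewrite sumn_cat IH mulSn. Qed.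

Lemma dval_mul n c : is_IA n (size c) c -> dval n c * size c = n * period c.
Proof.
case/and4P=> h1 h2 _ /eqP hsum.
have [/andP[p0 ps] hr _] := period_spec c h1.
move: hr; rewrite /repeats => /andP[hd /eqP e].
set p := period c in p0 ps hd e *.
set q := size c %/ p in e.
have hq : size c = q * p by rewrite divnK.
have hs : sumn c = q * sumn (take p c) by rewrite {1}e sumn_flatten_nseq.
have e2 : n * p = size c * (sumn (take p c) + p) by rewrite hq; nia.
by rewrite /dval; change (period c) with p; rewrite {1}e2 mulKn // e2 mulnC.
Qed.

Lemma dval_le n c : is_IA n (size c) c -> dval n c <= n.
Proof.
move=> h; have h1 : 0 < size c by case/and4P: h.
have [/andP[p0 ps] _ _] := period_spec c h1.
rewrite -(leq_pmul2r h1) dval_mul // leq_mul2l ps orbT //.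
Qed.

Lemma dval_aper n c : 0 < size c -> period c = size c -> dval n c = n.
Proof. by move=> h1 e; rewrite /dval e mulnK. Qed.

Lemma sum_dval n s : 1 <= s <= n -> \sum_(c <- Ks n s) dval n c = 'C(n, s).
Proof.
move=> hs; have s0 : 0 < s by case/andP: hs.
apply/eqP; rewrite -(eqn_pmul2r s0) big_distrl /=.
rewrite big_seq (eq_bigr (fun c => n * period c)); last first.
  by move=> c; rewrite mem_Ks => /andP[cI _]; have [<- _] := is_IA_size _ _ _ cI; rewrite dval_mul // (proj1 (is_IA_size _ _ _ cI)).
rewrite -big_seq -big_distrr /= sum_period // size_IAs //.
by rewrite mul_bin_diag prednK // mulnC.
Qed.

Lemma sumn_succ (u : seq nat) : sumn [seq k.+1 | k <- u] = sumn u + size u.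
Proof. by elim: u => [|a u IH] //=; rewrite IH addnS addSn addnA. Qed.

Lemma phiS (t : seq nat) i : i < size t -> phi t i.+2 = phi t i.+1 + (nth 0 t i).+1.
Proof. by move=> h; rewrite /phi /= (take_nth 0) // -cats1 map_cat sumn_cat /= addn0. Qed.

Lemma phi_full n t : is_IA n (size t) t -> phi t (size t).+1 = n.
Proof.
case/and4P=> h1 h2 _ /eqP hs.
by rewrite /phi /= take_size sumn_succ hs subnK.
Qed.

Lemma sumn_take_le j (t : seq nat) : sumn (take j t) <= sumn t.
Proof. by rewrite -{2}(cat_take_drop j t) sumn_cat leq_addr. Qed.

Lemma phi_lt n t i : is_IA n (size t) t -> 1 <= i <= size t -> phi t i < n.
Proof.
case/and4P=> h1 h2 _ /eqP hs hi.
have hm : minn i.-1 (size t) = i.-1 by apply/minn_idPl; lia.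
rewrite /phi sumn_succ size_take_min hm.
have := sumn_take_le i.-1 t; lia.
Qed.

Lemma sorted_map_iota (f : nat -> nat) a m :
  (forall i, a <= i -> i.+1 < a + m -> f i < f i.+1) -> sorted ltn [seq f i | i <- iota a m].
Proof.
elim: m a => [//|[|m] IH] a h //=.
apply/andP; split; first by apply: h; lia.
have := IH a.+1; rewrite /=; apply => i h1 h2; apply: h; lia.
Qed.

Definition Pl (t : seq nat) := [seq phi t i | i <- iota 1 (size t)].

Lemma sorted_Pl t : sorted ltn (Pl t).
Proof.
apply: sorted_map_iota => i h1 h2.
have -> : i = i.-1.+1 by lia.
rewrite phiS; last by lia.
by rewrite addnS ltnS leq_addr.
Qed.

Lemma modrep_mod n a : 0 < n -> modrep n a %% n = a %% n.
Proof. by rewrite /modrep => n0; case: ifP => [/eqP->|_]; rewrite ?modnn ?modn_mod. Qed.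

Lemma modrep_small n x : 1 <= x <= n -> modrep n x = x.
Proof.
move=> hx; rewrite /modrep; case: (ltnP x n) => h.
- by rewrite modn_small // ifF //; apply/negbTE; rewrite -lt0n; lia.
- have -> : x = n by lia.
  by rewrite modnn eqxx.
Qed.

Lemma mem_coal n x t y : 1 <= x <= n -> 0 < size t ->
  (y \in coalition n x t) = (y \in [seq modrep n (x + phi t i) | i <- iota 1 (size t)]).
Proof.
move=> hx ht; rewrite /coalition in_fset1U.
rewrite (_ : iota 1 (size t) = 1 :: iota 2 (size t).-1); last by case: (size t) ht.
have e1 : modrep n (x + phi t 1) = x.
  have -> : phi t 1 = 0 by rewrite /phi /= take0.
  by rewrite addn0 modrep_small.
rewrite map_cons inE e1; congr (_ || _).
by apply/imfsetP/mapP => [[i hi ->]|[i hi ->]]; exists i.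
Qed.

Lemma offset n x p : 1 <= x <= n -> p < n -> (modrep n (x + p) + (n - x)) %% n = p.
Proof.
move=> hx hp; have n0 : 0 < n by lia.
rewrite -modnDml modrep_mod // modnDml (_ : x + p + (n - x) = p + n); last by lia.
by rewrite modnDr modn_small.
Qed.

Lemma Pl_lt n t p : is_IA n (size t) t -> p \in Pl t -> p < n.
Proof.
move=> hI /mapP [i hi ->]; apply: phi_lt => //; move: hi; rewrite mem_iota; lia.
Qed.

Lemma Pl_mem n x t p : 1 <= x <= n -> is_IA n (size t) t -> p < n ->
  (p \in Pl t) = (modrep n (x + p) \in coalition n x t).
Proof.
move=> hx hI hp; have t0 : 0 < size t by case/and4P: hI.
rewrite mem_coal //; apply/mapP/mapP => [[i hi ->]|[i hi e]]; first by exists i.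
exists i => //; rewrite -(offset _ _ _ hx hp) e offset //.
apply: phi_lt => //; move: hi; rewrite mem_iota; lia.
Qed.

Lemma coal_inj n x t t' : 1 <= x <= n -> is_IA n (size t) t -> is_IA n (size t') t' ->
  coalition n x t = coalition n x t' -> t = t'.
Proof.
move=> hx hI hI' ec.
have eP : Pl t = Pl t'.
  apply: (irr_sorted_eq ltn_trans ltnn); rewrite ?sorted_Pl // => p.
  case: (ltnP p n) => hp.
  - by rewrite (Pl_mem _ _ _ _ hx hI hp) (Pl_mem _ _ _ _ hx hI' hp) ec.
  - apply/idP/idP => /[dup] h /Pl_lt; [move/(_ _ hI)|move/(_ _ hI')]; rewrite ltnNge hp.
    + by [].
    + by [].
have hs : size t = size t' by move: (congr1 size eP); rewrite !size_map !size_iota.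
have ephi : forall j, 1 <= j <= size t -> phi t j = phi t' j.
  move=> j hj; move: (congr1 (fun l => nth 0 l j.-1) eP).
  rewrite /Pl !(nth_map 0) ?size_iota -?hs; try lia.
  by rewrite !nth_iota -?hs; try lia; rewrite add1n prednK //; lia.
have key : forall u i, is_IA n (size u) u -> i < size u -> nth 0 u i = phi u i.+2 - phi u i.+1 - 1.
  by move=> u i _ hi; rewrite phiS //; lia.
apply: (eq_from_nth (x0:=0) hs) => i hi.
rewrite (key _ _ hI hi) (key _ _ hI'); last by rewrite -hs.
have -> : phi t i.+1 = phi t' i.+1 by apply: ephi; lia.
case: (ltnP i.+1 (size t)) => h.
- by rewrite ephi //; lia.
- have e1 : i.+1 = size t by lia.
  by rewrite e1 (phi_full _ _ hI) hs (phi_full _ _ hI').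
Qed.

Section Dcount.
Import GRing.Theory Num.Theory.

Definition Pm (n : nat) (a : int) (m : nat) : bool := (((m%:Z - a) %% n%:Z)%Z == 0)%R.

Lemma Pm_small n a m : 0 < n -> m < n -> Pm n a m = (m%:Z == (a %% n%:Z)%Z)%R.
Proof.
move=> n0 mn; rewrite /Pm.
have -> : ((((m%:Z - a) %% n%:Z)%Z == 0)%R) = (m%:Z == a %[mod n%:Z])%Z.
  rewrite eqz_mod_dvd; apply/eqP/idP => [h|/dvdz_mod0P //]; exact/dvdz_mod0P.
by rewrite modz_small // lez_nat ltz_nat /= mn.
Qed.

Lemma cnt_piece n a d : 0 < n -> d <= n ->
  count (Pm n a) (iota 0 d) = (((a %% n%:Z)%Z < d%:Z)%R : bool).
Proof.
move=> n0 dn.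
have r0 : (0 <= (a %% n%:Z)%Z)%R by apply: modz_ge0; rewrite eqz_nat -lt0n.
set r := (a %% n%:Z)%Z in r0 *.
have er : (r = (`|r|%N)%:Z)%R by rewrite gez0_abs.
rewrite (eq_in_count (a2 := pred1 `|r|%N)); last first.
  move=> m; rewrite mem_iota /= => hm; rewrite Pm_small //; last by lia.
  by rewrite -/r {1}er eqz_nat.
by rewrite (count_uniq_mem _ (iota_uniq 0 d)) mem_iota /= add0n [in RHS]er ltz_nat.
Qed.

Lemma cnt_shift n a k r : 0 < n ->
  count (Pm n a) (iota (k * n) r) = count (Pm n a) (iota 0 r).
Proof.
move=> n0; rewrite -[k * n]addn0 iotaDl count_map; apply: eq_count => m /=.
rewrite /Pm PoszD PoszM (_ : (_ - a = k%:Z * n%:Z + (m%:Z - a))%R); last by rewrite addrA.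
by rewrite modzMDl.
Qed.

Lemma cnt_total n a D : 0 < n ->
  count (Pm n a) (iota 0 D) = D %/ n + (((a %% n%:Z)%Z < (D %% n)%:Z)%R : bool).
Proof.
move=> n0.
have hq : forall q, count (Pm n a) (iota 0 (q * n)) = q.
  elim=> [|q IH]; first by rewrite mul0n.
  rewrite mulSn addnC iotaD add0n count_cat IH cnt_shift // cnt_piece //.
  by rewrite ltz_pmod // addn1.
rewrite {1}(divn_eq D n) iotaD add0n count_cat hq cnt_shift // cnt_piece //.
exact: ltnW (ltn_pmod _ _).
Qed.

Lemma dcount n (ds : seq nat) (a : int) : 0 < n -> all (fun d => d <= n) ds ->
  count (fun j => (((a - (sumn (take j ds))%:Z) %% n%:Z)%Z < (nth 0 ds j)%:Z)%R)
    (iota 0 (size ds))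
  = count (Pm n a) (iota 0 (sumn ds)).
Proof.
move=> n0; elim: ds a => [//|d ds IH] a /= /andP[dn hall].
rewrite -add1n iotaD /= count_cat /= subr0 addn0 add0n.
rewrite (_ : iota 1 (size ds) = map S (iota 0 (size ds))); last first.
  by have := iotaDl 1 0 (size ds); rewrite addn0 => ->; apply: eq_map => j; rewrite add1n.
rewrite count_map.
rewrite (eq_count (a2 := fun j => (((a - d%:Z - (sumn (take j ds))%:Z) %% n%:Z)%Z < (nth 0 ds j)%:Z)%R)); last first.
  by move=> j /=; rewrite PoszD opprD addrA.
rewrite (cnt_piece n a d) // IH //; congr (_ + _).
have -> : iota d (sumn ds) = map (addn d) (iota 0 (sumn ds)) by rewrite -iotaDl addn0.
rewrite count_map.
apply: eq_count => m /=; rewrite /Pm PoszD.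
by rewrite (_ : (m%:Z - (a - d%:Z) = d%:Z + m%:Z - a)%R) //; lia.
Qed.
End Dcount.

Lemma uniq_flatten_sizes (F : nat -> seq (seq nat)) a m :
  (forall s, uniq (F s)) -> (forall s t, t \in F s -> size t = s) ->
  uniq (flatten [seq F s | s <- iota a m]).
Proof.
move=> hu hs; elim: m a => [//|m IH] a /=.
rewrite cat_uniq hu IH // andbT /=.
apply/hasPn => t /flatten_mapP [s hs' ht]; apply/negP => ht'.
move: hs'; rewrite mem_iota => /andP[h1 _].
have := hs _ _ ht; have := hs _ _ ht'; lia.
Qed.

Definition Ps (n s : nat) := [seq t <- bounded_seqs s n.+1 | inP n s t].
Definition FA (n : nat) := flatten [seq enumA n s | s <- iota 1 n].
Definition PL (n : nat) := flatten [seq Ps n s | s <- iota 1 n].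

Lemma inA_IA n s t : inA n s t -> is_IA n s t /\ size t = s.
Proof. by case/andP=> /andP[h _] _; split => //; case/and4P: h => _ _ /eqP. Qed.
Lemma inP_IA n s t : inP n s t -> is_IA n s t /\ size t = s.
Proof. by case/andP=> /andP[h _] _; split => //; case/and4P: h => _ _ /eqP. Qed.

Lemma mem_FA n t : t \in FA n -> inA n (size t) t.
Proof.
by case/flatten_mapP => s _; rewrite mem_filter => /andP[h _]; have [_ ->] := inA_IA _ _ _ h.
Qed.

Lemma uniq_FA n : uniq (FA n).
Proof.
apply: uniq_flatten_sizes => s; first exact/filter_uniq/uniq_bounded.
by move=> t; rewrite mem_filter => /andP[/inA_IA [_ ->] _].
Qed.

Lemma uniq_PL n : uniq (PL n).
Proof.
apply: uniq_flatten_sizes => s; first exact/filter_uniq/uniq_bounded.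
by move=> t; rewrite mem_filter => /andP[/inP_IA [_ ->] _].
Qed.

Lemma mem_PL n t : (t \in PL n) = has (fun s => inP n s t) (iota 1 n).
Proof.
apply/flatten_mapP/hasP => [[s hs]|[s hs ht]].
- by rewrite mem_filter => /andP[h _]; exists s.
- exists s => //; rewrite mem_filter ht /=.
  have [hI _] := inP_IA _ _ _ ht; have : t \in IAs n s by rewrite mem_IAs.
  by rewrite mem_filter => /andP[].
Qed.

Lemma sum_const_seq (T : Type) (l : seq T) k : \sum_(t <- l) k = size l * k.
Proof. by elim: l => [|a l IH]; rewrite ?big_nil ?big_cons // IH mulSn. Qed.

Lemma per_size n s : 1 <= s <= n ->
  n * size (enumA n s) + \sum_(t <- Ps n s) dval n t = 'C(n, s).
Proof.
move=> hs; rewrite -sum_dval // /Ks big_filter [RHS](bigID (fun t => period t == s)) /=.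
congr (_ + _).
- rewrite -big_filter -/(enumA n s) big_seq (eq_bigr (fun _ => n)).
    by rewrite -big_seq sum_const_seq mulnC.
  move=> t; rewrite mem_filter => /andP[hA _]; have [hI hsz] := inA_IA _ _ _ hA.
  apply: dval_aper; first by rewrite hsz; case/and4P: hI.
  by case/andP: hA => _ /eqP ->.
- rewrite /Ps big_filter; apply: eq_bigl => t.
  rewrite /inP; case h: (Defs.inE n s t) => //=.
  move: h => /andP[hI _]; have [hsz s0] := is_IA_size _ _ _ hI.
  have t0 : 0 < size t by rewrite hsz.
  have [/andP[_ ps] _ _] := period_spec t t0.
  by rewrite ltn_neqAle -hsz ps andbT.
Qed.

Lemma sum_binom n : \sum_(s <- iota 1 n) 'C(n, s) = 2 ^ n - 1.
Proof.
have := expnDn 1 1 n; rewrite big_ord_recl /= bin0 !exp1n !muln1 add1n => ->.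
rewrite addnC addnK.
have -> : iota 1 n = map S (iota 0 n).
  by have := iotaDl 1 0 n; rewrite addn0 => ->; apply: eq_map => j; rewrite add1n.
rewrite big_map (_ : iota 0 n = index_iota 0 n); last by rewrite /index_iota subn0.
rewrite big_mkord.
by apply: eq_bigr => i _; rewrite !exp1n !muln1.
Qed.

Lemma total n L : 1 <= n -> uniq L ->
  (forall t : seq nat, (t \in L) = has (fun s => inP n s t) (iota 1 n)) ->
  n * size (FA n) + sumn [seq dval n t | t <- L] = 2 ^ n - 1.
Proof.
move=> n1 uL hL.
have pe : perm_eq L (PL n) by apply: uniq_perm => // [|t]; [exact: uniq_PL | rewrite hL mem_PL].
rewrite sumnE big_map (perm_big _ pe) /= /PL big_flatten /= big_map.
rewrite /FA size_flatten /shape -map_comp sumnE big_map big_distrr /= -big_split /=.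
rewrite -sum_binom big_seq [RHS]big_seq; apply: eq_bigr => s; rewrite mem_iota => hs.
by rewrite per_size //; lia.
Qed.

Lemma card_imfset_seq (T : choiceType) (f : T -> {fset nat}) (l : seq T) :
  uniq l -> {in l &, injective f} -> #|` [fset f t | t in l]%fset| = size l.
Proof.
move=> ul inj; by rewrite card_in_imfset //= undup_id.
Qed.

Lemma final_arith n A D (b : bool) : 0 < n -> (b -> 0 < D %% n) ->
  ((n * A + D) %/ n <= A + (D %/ n + b)) /\ (A + (D %/ n + b) <= (n * A + D + n.-1) %/ n).
Proof.
move=> n0 hb.
have hD := divn_eq D n; have hr := ltn_pmod D n0.
move: hb hD hr; set q := D %/ n; set r := D %% n => hb hD hr.
split.
- rewrite -ltnS ltn_divLR //; rewrite hD; case: b hb => /= hb; nia.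
- rewrite leq_divRL //; rewrite hD; case: b hb => /= hb; first have := hb isT; nia.
Qed.

Local Open Scope fset_scope.

Theorem theorem10 (n : nat) (L : seq (seq nat)) :
  1 <= n ->
  uniq L ->
  (forall t : seq nat, (t \in L) = has (fun s => inP n s t) (iota 1 n)) ->
  forall x : nat, 1 <= x <= n ->
    ((2 ^ n - 1) %/ n <= #|` CV n L x |)%N /\
    (#|` CV n L x | <= (2 ^ n - 1 + n.-1) %/ n)%N.
Proof.
move=> n1 uL hL x hx.
have LIA : forall t, t \in L -> is_IA n (size t) t /\ inP n (size t) t.
  move=> t; rewrite hL => /hasP [s _ h]; have [hI hs] := inP_IA _ _ _ h; by rewrite hs.
have FIA : forall t, t \in FA n -> is_IA n (size t) t.
  move=> t /mem_FA h; exact: (inA_IA _ _ _ h).1.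
set J := [seq j <- iota 0 (size L) | designated n L x j].
set X := [fset coalition n x t | t in FA n]%fset.
set Y := [fset coalition n x (nth [::] L j) | j in J]%fset.
have eCV : CV n L x = (X `|` Y)%fset by [].
have cX : #|` X| = size (FA n).
  apply: card_imfset_seq; first exact: uniq_FA.
  move=> t t' ht ht'; apply: coal_inj => //; exact: FIA.
have hm : forall k, k < size L -> nth [::] L k \in L by move=> k hk; apply: mem_nth.
have cY : #|` Y| = size J.
  apply: card_imfset_seq; first exact/filter_uniq/iota_uniq.
  move=> j j'; rewrite !mem_filter !mem_iota /= => /andP[_ hj] /andP[_ hj'] e.
  have := coal_inj _ _ _ _ hx (LIA _ (hm _ hj)).1 (LIA _ (hm _ hj')).1 e.
  by move/eqP; rewrite nth_uniq // => /eqP.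
have cI : (X `&` Y)%fset = fset0.
  apply/fsetP => c; rewrite in_fsetI in_fset0; apply/negbTE/negP.
  case/andP => /imfsetP [t ht ->] /imfsetP [j hj e].
  move: hj; rewrite /= mem_filter mem_iota /= => /andP[_ hj].
  have et := coal_inj _ _ _ _ hx (FIA _ ht) (LIA _ (hm _ hj)).1 e.
  have := mem_FA _ _ ht; have := (LIA _ (hm _ hj)).2; rewrite -et.
  by case/andP=> _ h1 /andP[_ /eqP h2]; rewrite h2 ltnn in h1.
have cCV : #|` CV n L x| = (size (FA n) + size J)%N.
  by rewrite eCV -cX -cY -cardfsUI cI cardfs0 addn0.
set ds := [seq dval n t | t <- L].
have hall : all (fun d => d <= n) ds.
  by apply/allP => d /mapP [t ht ->]; apply: dval_le; exact: (LIA _ ht).1.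
have cJ : size J = count (Pm n (x%:Z - 1)%R) (iota 0 (sumn ds)).
  rewrite size_filter -(dcount _ _ _ n1 hall) size_map.
  apply: eq_in_count => j; rewrite mem_iota /= => hj.
  by rewrite /designated /Hval /ds -map_take (nth_map [::]).
have htot := total n L n1 uL hL.
rewrite cCV cJ cnt_total // -htot; apply: final_arith => // h.
rewrite -ltz_nat; apply: Order.POrderTheory.le_lt_trans h; apply: modz_ge0.
by rewrite eqz_nat -lt0n.
Qed.
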